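(* Let $G=(V,E)$ be a directed graph with $n=|V|$, $h>0$ a length bound, $1\le\alpha\le\log n$, and $u,v,w\in V$. Then: (1) $\sum_{a\in V}w_h^\alpha(u,a)\le n$; (2) $\sum_{a\in V}w_h^\alpha(u,a)\ge1$; (3) $w_h^\alpha(u,v)\ge 2^{-\alpha\overline{\mathrm{dist}}(u,v)/h}-1/n^2$; (4) $2^{-\alpha\overline{\mathrm{dist}}(w,v)/h}\cdot w_h^\alpha(u,v)-1/n^2\le w_h^\alpha(u,w)\le 2^{\alpha\overline{\mathrm{dist}}(w,v)/h}\cdot\left(w_h^\alpha(u,v)+1/n^2\right)$.
   Context: $G$ has positive integer edge lengths; $\mathrm{dist}(u,v)$ is the directed shortest-path distance ($\infty$ if unreachable) and $\overline{\mathrm{dist}}(u,v)=\mathrm{dist}(u,v)+\mathrm{dist}(v,u)$ (round-trip distance). The $h$-length $\alpha$-exponential distance weight is $w_h^\alpha(u,v)=1$ if $u=v$; $w_h^\alpha(u,v)=2^{-\alpha\overline{\mathrm{dist}}(u,v)/h}$ if $u\ne v$ and $\overline{\mathrm{dist}}(u,v)\le\frac{2h\log_2n}{\alpha}$; and $w_h^\alpha(u,v)=0$ otherwise. *)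

(* Defs.v *)
From HB Require Import structures.
From mathcomp Require Import all_boot all_order all_algebra.
From mathcomp Require Import all_classical all_reals all_analysis.
Set Implicit Arguments. Unset Strict Implicit. Unset Printing Implicit Defensive.
Import Order.TTheory GRing.Theory Num.Theory.
Local Open Scope ring_scope.

Section Graph.
Variable V : finType.
Variable E : rel V.
Variable len : V -> V -> nat.

Fixpoint walk_len (x : V) (p : seq V) : nat :=
  match p with
  | [::] => 0
  | y :: p' => len x y + walk_len y p'
  end.

Definition walk_of_len (u v : V) (d : nat) : Prop :=
  exists p : seq V, [/\ path E u p, last u p = v & walk_len u p = d].

(* directed shortest-path distance; None encodes +infinity (unreachable) *)
Definition dist (u v : V) : option nat :=
  match pselect (exists d, `[< walk_of_len u v d >]) with
  | left H => Some (ex_minn H)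
  | right _ => None
  end.

Definition rdist (u v : V) : option nat :=
  match dist u v, dist v u with
  | Some a, Some b => Some (a + b)%N
  | _, _ => None
  end.

Variable R : realType.

Definition log2 (x : R) : R := ln x / ln 2.

Definition expw (h alpha : R) (u v : V) : R :=
  if u == v then 1 else
  match rdist u v with
  | Some d => if d%:R <= 2 * h * log2 #|V|%:R / alpha
              then 2 `^ (- (alpha * d%:R / h)) else 0
  | None => 0
  end.

Definition decay (c : R) (d : option nat) : \bar R :=
  match d with Some d => (2 `^ (- (c * d%:R)))%:E | None => 0%E end.

Definition growth (c : R) (d : option nat) : \bar R :=
  match d with Some d => (2 `^ (c * d%:R))%:E | None => (+oo)%E end.

End Graph.

(* Main.v *)
Require Import Defs.
From HB Require Import structures.
From mathcomp Require Import all_boot all_order all_algebra.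
From mathcomp Require Import all_classical all_reals all_analysis.
From mathcomp Require Import lra.
Import Order.TTheory GRing.Theory Num.Theory.
Local Open Scope ring_scope.
Set Implicit Arguments. Unset Strict Implicit. Unset Printing Implicit Defensive.

Section Helpers.
Variable V : finType.
Variable E : rel V.
Variable len : V -> V -> nat.

Lemma walk_len_cat x p q :
  walk_len len x (p ++ q) = (walk_len len x p + walk_len len (last x p) q)%N.
Proof.
elim: p x => [|y p IH] x //=.
by rewrite IH addnA.
Qed.

Lemma dist_spec x y :
  match dist E len x y with
  | Some a => walk_of_len E len x y a /\ forall b, walk_of_len E len x y b -> (a <= b)%N
  | None => forall b, ~ walk_of_len E len x y b
  end.
Proof.
rewrite /dist; case: pselect => [H|H].
  case: ex_minnP => m /asboolP Hm Hmin; split => // b Hb.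
  by apply: Hmin; apply/asboolP.
by move=> b Hb; apply: H; exists b; apply/asboolP.
Qed.

Lemma dist_refl x : dist E len x x = Some 0%N.
Proof.
have := dist_spec x x; case: (dist E len x x) => [a [_ Ha]|H].
  have : walk_of_len E len x x 0 by exists [::].
  by move/Ha; rewrite leqn0 => /eqP ->.
by exfalso; apply: (H 0%N); exists [::].
Qed.

Lemma dist_tri x y z a b :
  dist E len x y = Some a -> dist E len y z = Some b ->
  exists m, dist E len x z = Some m /\ (m <= a + b)%N.
Proof.
move=> Hxy Hyz.
have := dist_spec x y; rewrite Hxy => -[[p [Pp Lp Wp]] _].
have := dist_spec y z; rewrite Hyz => -[[q [Pq Lq Wq]] _].
have Wxz : walk_of_len E len x z (a + b).
  exists (p ++ q); split.
  - by rewrite cat_path Pp Lp Pq.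
  - by rewrite last_cat Lp.
  - by rewrite walk_len_cat Lp Wp Wq.
have := dist_spec x z; case: (dist E len x z) => [m [_ Hm]|H].
  by exists m; split => //; apply: Hm.
by exfalso; apply: (H _ Wxz).
Qed.

Lemma rdist_sym x y : rdist E len x y = rdist E len y x.
Proof.
by rewrite /rdist; case: (dist E len x y) => [a|]; case: (dist E len y x) => [b|] //; rewrite addnC.
Qed.

Lemma rdist_refl x : rdist E len x x = Some 0%N.
Proof. by rewrite /rdist dist_refl. Qed.

Lemma rdist_tri x y z a b :
  rdist E len x y = Some a -> rdist E len y z = Some b ->
  exists m, rdist E len x z = Some m /\ (m <= a + b)%N.
Proof.
rewrite /rdist.
case Exy: (dist E len x y) => [a1|] //; case Eyx: (dist E len y x) => [a2|] // [<-].
case Eyz: (dist E len y z) => [b1|] //; case Ezy: (dist E len z y) => [b2|] // [<-].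
have [m1 [-> H1]] := dist_tri Exy Eyz.
have [m2 [-> H2]] := dist_tri Ezy Eyx.
exists (m1 + m2)%N; split => //.
rewrite -addnA (addnCA a2) addnA addnA -addnA.
by apply: leq_add => //; rewrite addnC.
Qed.

End Helpers.
Section Reals.
Variable V : finType.
Variable E : rel V.
Variable len : V -> V -> nat.
Variable R : realType.
Variables h alpha : R.
Hypothesis h_pos : 0 < h.
Hypothesis alpha_pos : 0 < alpha.
Let c := alpha / h.
Let l : R := ln 2.
Let n : R := #|V|%:R.
Hypothesis n_pos : 0 < n.

Definition dec (o : option nat) : R :=
  match o with Some d => expR (- (c * d%:R) * l) | None => 0 end.

Lemma l_gt0 : 0 < l.
Proof. by apply: ln_gt0; rewrite ltr1n. Qed.

Lemma c_gt0 : 0 < c.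
Proof. by apply: divr_gt0. Qed.

Lemma pow2E (x : R) : 2 `^ x = expR (x * l).
Proof. by rewrite /powR ifF // pnatr_eq0. Qed.

Lemma decayE o : decay (alpha / h) o = (dec o)%:E.
Proof. by case: o => [d|] //=; rewrite pow2E. Qed.

Lemma dec_ge0 o : 0 <= dec o.
Proof. by case: o => [d|] //=; apply/ltW/expR_gt0. Qed.

Lemma dec_le1 o : dec o <= 1.
Proof.
case: o => [d|] //=; rewrite -[X in _ <= X]expR0 ler_expR.
have := mulr_gt0 c_gt0 l_gt0; have : 0 <= (d%:R : R) by [].
nra.
Qed.

Lemma dec_tri x y z :
  dec (rdist E len x y) * dec (rdist E len y z) <= dec (rdist E len x z).
Proof.
case Exy: (rdist E len x y) => [a|]; last by rewrite mul0r dec_ge0.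
case Eyz: (rdist E len y z) => [b|]; last by rewrite mulr0 dec_ge0.
have [m [-> Hm]] := rdist_tri Exy Eyz.
rewrite /= -expRD ler_expR.
have : (m%:R : R) <= a%:R + b%:R by rewrite -natrD ler_nat.
have := mulr_gt0 c_gt0 l_gt0.
nra.
Qed.

Lemma W_ge0 x y : 0 <= expw E len h alpha x y.
Proof.
rewrite /expw; case: eqP => // _; case: rdist => [d|] //.
by case: ifP => // _; apply: powR_ge0.
Qed.

Lemma W_le_dec x y : expw E len h alpha x y <= dec (rdist E len x y).
Proof.
rewrite /expw; case: eqP => [<-|_]; first by rewrite rdist_refl /= mulr0 oppr0 mul0r expR0.
case: rdist => [d|] //=.
case: ifP => _; last by apply/ltW/expR_gt0.
by rewrite pow2E /c mulrAC.
Qed.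

Lemma thresh (d : R) : ~~ (d <= 2 * h * log2 n / alpha) ->
   2 * log2 n < c * d.
Proof.
rewrite -ltNge ltr_pdivrMr // => H.
rewrite /c mulrAC ltr_pdivlMr //.
lra.
Qed.

Lemma dec_le_W x y : dec (rdist E len x y) <= expw E len h alpha x y + 1 / n ^+ 2.
Proof.
have hn : 0 <= 1 / n ^+ 2 by apply: divr_ge0 => //; apply: exprn_ge0; apply: ltW.
rewrite /expw; case: eqP => [_|_].
  by apply: le_trans (dec_le1 _) _; rewrite lerDl.
case: rdist => [d|] //=; last by rewrite add0r.
case: ifP => Hd.
  by rewrite pow2E /c mulrAC lerDl.
rewrite add0r.
have H := thresh (negbT Hd).
have -> : 1 / n ^+ 2 = expR (- (2 * log2 n) * l).
  rewrite mulNr expRN /log2 /l -mulrA divfK; last by apply: lt0r_neq0; apply: l_gt0.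
  rewrite mulr2n.
  by rewrite mulrDl !mul1r expRD lnK ?posrE // div1r expr2.
rewrite ler_expR.
have := l_gt0.
nra.
Qed.

End Reals.

Theorem lemma3p11 (V : finType) (E : rel V) (len : V -> V -> nat)
  (len_pos : forall x y, E x y -> (0 < len x y)%N)
  (R : realType) (h alpha : R) (h_pos : 0 < h)
  (alpha_ge1 : 1 <= alpha) (alpha_le : alpha <= log2 (#|V|%:R : R))
  (u v w : V) :
  let n : R := #|V|%:R in
  let W := expw E len h alpha in
  [/\ \sum_(a : V) W u a <= n,
      1 <= \sum_(a : V) W u a,
      (decay (alpha / h) (rdist E len u v) - (1 / n ^+ 2)%:E
         <= (W u v)%:E)%E,
      (decay (alpha / h) (rdist E len w v) * (W u v)%:E - (1 / n ^+ 2)%:E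
         <= (W u w)%:E)%E
    & ((W u w)%:E
         <= growth (alpha / h) (rdist E len w v) * (W u v + 1 / n ^+ 2)%:E)%E].
Proof.
move=> n W.
have alpha_pos : 0 < alpha by apply: lt_le_trans alpha_ge1.
have n_pos : 0 < n by rewrite /n ltr0n; apply/card_gt0P; exists u.
have hn : 0 <= 1 / n ^+ 2 by apply: divr_ge0 => //; apply: exprn_ge0; apply: ltW.
have Wge0 := W_ge0 E len h alpha.
have Wdec := W_le_dec E len h alpha.
have decW := dec_le_W E len h_pos alpha_pos n_pos.
have dtri := dec_tri E len h_pos alpha_pos.
have dge0 := dec_ge0 h alpha.
split.
- apply: le_trans (_ : \sum_(a : V) (1 : R) <= n).
    apply: ler_sum => a _; apply: le_trans (Wdec u a) _; exact: (dec_le1 h_pos alpha_pos).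
  by rewrite sumr_const.
- rewrite (bigD1 u) //= {1}/W /expw eqxx lerDl.
  by apply: sumr_ge0 => a _; exact: (Wge0 u a).
- rewrite decayE -EFinB lee_fin lerBlDr; exact: decW.
- rewrite decayE -EFinM -EFinB lee_fin lerBlDr.
  apply: le_trans (decW u w).
  apply: le_trans (dtri u v w).
  rewrite (rdist_sym _ _ w v) mulrC. apply: (ler_wpM2r (dge0 _)).
  exact: Wdec.
- case Ewv: (rdist E len w v) => [d|] /=; last first.
    rewrite gt0_mulye ?leey // lte_fin; apply: ltr_wpDl; first exact: Wge0.
    by apply: divr_gt0 => //; apply: exprn_gt0.
  rewrite -EFinM lee_fin pow2E.
  apply: le_trans (Wdec u w) _.
  have H := dtri u w v; rewrite Ewv /= in H.
  have e0 : 0 < expR (alpha / h * d%:R * ln 2) by apply: expR_gt0.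
  have e1 : expR (alpha / h * d%:R * ln 2) * expR (- (alpha / h * d%:R) * ln 2) = 1.
    by rewrite -expRD mulNr addrN expR0.
  apply: le_trans (_ : expR (alpha / h * d%:R * ln 2) * dec h alpha (rdist E len u v) <= _).
    have -> : dec h alpha (rdist E len u w) = expR (alpha / h * d%:R * ln 2) *
       (expR (- (alpha / h * d%:R) * ln 2) * dec h alpha (rdist E len u w)).
      by rewrite mulrA e1 mul1r.
    apply: ler_wpM2l; first exact: ltW.
    by rewrite mulrC.
  by apply: ler_wpM2l; [exact: ltW | exact: decW].
Qed.
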